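(* The functor $\epsilon:\mathcal{T}_q\to\mathcal{E}^f$ is full: for any two finite-dimensional non-degenerate quadratic spaces $V,W$ over $\mathbb{F}_2$ and any linear map $f:V\to W$ of underlying vector spaces, there exists a morphism $T\in\mathrm{Hom}_{\mathcal{T}_q}(V,W)$ of the form $T=[V\xrightarrow{\varphi}W\perp Y\hookleftarrow W]$ with $\epsilon(T)=f$.
   Context: All vector spaces are over $\mathbb{F}_2$; $\mathcal{E}^f$ is the category of finite-dimensional vector spaces. A quadratic form on $V$ is $q:V\to\mathbb{F}_2$ with $B(x,y)=q(x+y)+q(x)+q(y)$ bilinear; non-degenerate means $B$ has trivial radical. $\mathcal{E}_q$: objects non-degenerate finite-dimensional quadratic spaces, morphisms linear maps preserving $q$. Pseudo push-out of $f:V\to W=f(V)\perp V'$ and $g:V\to X=g(V)\perp V''$: the space $V\perp V'\perp V''$ with maps $f(v)+v'\mapsto v+v'$ and $g(v)+v''\mapsto v+v''$. $\mathcal{T}_q$: same objects as $\mathcal{E}_q$; morphisms $V\to W$ are classes of diagrams $[V\xrightarrow{f}X\xleftarrow{g}W]$ in $\mathcal{E}_q$ modulo the equivalence relation generated by existence of an $\mathcal{E}_q$-morphism $X_1\to X_2$ compatible with both legs; composition uses the pseudo push-out. $\epsilon:\mathcal{T}_q\to\mathcal{E}^f$ is the identity on underlying spaces and sends $[V\xrightarrow{f}X\xleftarrow{g}W]$ to $p_g\circ f$, where $p_g:X=g(W)\perp g(W)^\perp\to W$ is orthogonal projection onto $g(W)$ followed by $g^{-1}$. *)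

(* Defs.v *)
From HB Require Import structures.
From mathcomp Require Import all_boot all_order all_algebra.
Set Implicit Arguments. Unset Strict Implicit. Unset Printing Implicit Defensive.
Import GRing.Theory.
Local Open Scope ring_scope.

Definition polar (n : nat) (q : 'rV['F_2]_n -> 'F_2) (x y : 'rV['F_2]_n) : 'F_2 :=
  q (x + y) + q x + q y.

Definition is_quad_form (n : nat) (q : 'rV['F_2]_n -> 'F_2) : Prop :=
  (forall (a : 'F_2) x x' y, polar q (a *: x + x') y = a * polar q x y + polar q x' y) /\
  (forall (a : 'F_2) x y y', polar q x (a *: y + y') = a * polar q x y + polar q x y').

Definition is_nondeg (n : nat) (q : 'rV['F_2]_n -> 'F_2) : Prop :=
  forall x, (forall y, polar q x y = 0) -> x = 0.

Definition orth_sum (m k : nat) (qW : 'rV['F_2]_m -> 'F_2) (qY : 'rV['F_2]_k -> 'F_2)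
  (x : 'rV['F_2]_(m + k)) : 'F_2 := qW (lsubmx x) + qY (rsubmx x).

Definition incl_l (m k : nat) (w : 'rV['F_2]_m) : 'rV['F_2]_(m + k) := row_mx w 0.

(* proj_spec qX g x w : w = p_g(x), i.e. x - g(w) is orthogonal to g(W)
   (orthogonal projection onto g(W) followed by g^{-1}). *)
Definition proj_spec (nX nW : nat) (qX : 'rV['F_2]_nX -> 'F_2)
  (g : 'rV['F_2]_nW -> 'rV['F_2]_nX) (x : 'rV['F_2]_nX) (w : 'rV['F_2]_nW) : Prop :=
  forall w', polar qX (x - g w) (g w') = 0.

(* Main.v *)
Require Import Defs.
From HB Require Import structures.
From mathcomp Require Import all_boot all_order all_algebra.
From mathcomp Require Import ring.
Import GRing.Theory.
Local Open Scope ring_scope.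

Lemma F2P (x : 'F_2) : x = 0 \/ x = 1.
Proof.
case: x => [[|[|i]] Hi].
- by left; apply/val_inj.
- by right; apply/val_inj.
- by [].
Qed.

Ltac f2brute := repeat (let a := fresh in move=> a; case: (F2P a) => ->; clear a); first [by apply/val_inj | by move=> _; apply/val_inj | (move/(congr1 val); vm_compute; discriminate)].

Definition dot n (a b : 'rV['F_2]_n) : 'F_2 := \sum_i a 0 i * b 0 i.
Arguments dot {n}.

Lemma dotDZl n (c : 'F_2) (x x' y : 'rV['F_2]_n) :
  dot (c *: x + x') y = c * dot x y + dot x' y.
Proof. rewrite /dot mulr_sumr -big_split; apply: eq_bigr => j _; rewrite !mxE /=; ring. Qed.
Lemma dotDZr n (c : 'F_2) (x y y' : 'rV['F_2]_n) :
  dot x (c *: y + y') = c * dot x y + dot x y'.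
Proof. rewrite /dot mulr_sumr -big_split; apply: eq_bigr => j _; rewrite !mxE /=; ring. Qed.
Lemma dotDl n (x x' y : 'rV['F_2]_n) : dot (x + x') y = dot x y + dot x' y.
Proof. by have := @dotDZl _ 1 x x' y; rewrite scale1r mul1r. Qed.
Lemma dotDr n (x y y' : 'rV['F_2]_n) : dot x (y + y') = dot x y + dot x y'.
Proof. by have := @dotDZr _ 1 x y y'; rewrite scale1r mul1r. Qed.
Lemma dot0r n (x : 'rV['F_2]_n) : dot x 0 = 0.
Proof. by rewrite /dot big1 // => i _; rewrite mxE mulr0. Qed.
Lemma dot0l n (x : 'rV['F_2]_n) : dot 0 x = 0.
Proof. by rewrite /dot big1 // => i _; rewrite mxE mul0r. Qed.
Lemma dot_delta n (a : 'rV['F_2]_n) i : dot a (delta_mx 0 i) = a 0 i.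
Proof.
rewrite /dot (bigD1 i) //= big1 ?addr0 => [|j ji]; rewrite mxE ?eqxx ?mulr1 //.
by rewrite (negbTE ji) andbF mulr0.
Qed.

Lemma addxx (x : 'F_2) : x + x = 0.
Proof. by case: (F2P x) => ->; apply/val_inj. Qed.
Lemma dotC n (a b : 'rV['F_2]_n) : dot a b = dot b a.
Proof. by apply: eq_bigr => i _; rewrite mulrC. Qed.

Lemma q0 n (q : 'rV['F_2]_n -> 'F_2) : is_quad_form q -> q 0 = 0.
Proof.
move=> [H1 _]; have := H1 1 0 0 0; rewrite scaler0 add0r mul1r.
rewrite /polar !addr0; move: (q 0); f2brute.
Qed.

Theorem mainTheorem2 (n m : nat)
  (qV : 'rV['F_2]_n -> 'F_2) (qW : 'rV['F_2]_m -> 'F_2) :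
  is_quad_form qV -> is_nondeg qV ->
  is_quad_form qW -> is_nondeg qW ->
  forall f : {linear 'rV['F_2]_n -> 'rV['F_2]_m},
  exists (k : nat) (qY : 'rV['F_2]_k -> 'F_2)
         (phi : {linear 'rV['F_2]_n -> 'rV['F_2]_(m + k)}),
    [/\ is_quad_form qY, is_nondeg qY,
        (forall v, orth_sum qW qY (phi v) = qV v) &
        (forall v, proj_spec (orth_sum qW qY) (@incl_l m k) (phi v) (f v))].
Proof.
move=> qVq _ qWq _ f.
pose h v := qV v + qW (f v).
have h0 : h 0 = 0 by rewrite /h linear0 !q0 ?addr0.
have ph : forall x y, polar h x y = polar qV x y + polar qW (f x) (f y).
  move=> x y; rewrite /polar /h linearD /=; ring.
pose qY (x : 'rV['F_2]_(n + n)) := h (lsubmx x) + dot (lsubmx x) (rsubmx x).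
have pY : forall x y, polar qY x y =
    polar h (lsubmx x) (lsubmx y) + dot (lsubmx x) (rsubmx y) + dot (lsubmx y) (rsubmx x).
  move=> x y; rewrite /polar /qY !linearD /= !dotDl !dotDr.
  move: (h (lsubmx x + lsubmx y)) (h (lsubmx x)) (h (lsubmx y)) (dot (lsubmx x) (rsubmx x))
    (dot (lsubmx x) (rsubmx y)) (dot (lsubmx y) (rsubmx x)) (dot (lsubmx y) (rsubmx y)); f2brute.
pose M := row_mx (lin1_mx f) (row_mx (1%:M : 'M['F_2]_n) (0 : 'M['F_2]_(n, n))).
have phiE : forall v, v *m M = row_mx (f v) (row_mx v 0).
  move=> v; rewrite /M !mul_mx_row mul_rV_lin1 mulmx1 mulmx0 //.
have qY0 : qY 0 = 0 by rewrite /qY linear0 h0 dot0l addr0.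
exists (n + n), qY, (mulmxr M); split.
- case: qVq => [V1 V2]; case: qWq => [W1 W2].
  split=> a x x' y; rewrite !pY !ph !linearD !linearZ /= ?V1 ?V2 ?W1 ?W2
     ?dotDZl ?dotDZr ?dotDl ?dotDr; ring.
- move=> x Hx.
  have L : lsubmx x = 0.
    apply/rowP => i.
    have := Hx (row_mx 0 (delta_mx 0 i)).
    rewrite pY row_mxKl row_mxKr dot0l addr0 dot_delta.
    by rewrite {1}/polar addr0 h0 addr0 addxx add0r => ->; rewrite mxE.
  have R : rsubmx x = 0.
    apply/rowP => i.
    have := Hx (row_mx (delta_mx 0 i) 0).
    rewrite pY row_mxKl row_mxKr L dot0l addr0 dotC dot_delta.
    by rewrite {1}/polar add0r h0 addr0 addxx add0r => ->; rewrite mxE.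
  by rewrite -[x]hsubmxK L R row_mx0.
- move=> v; rewrite /= phiE /orth_sum row_mxKl row_mxKr /qY row_mxKl row_mxKr dot0r /h addr0.
  move: (qV v) (qW (f v)); f2brute.
- move=> v w'; rewrite /= phiE /incl_l /polar /orth_sum opp_row_mx !add_row_mx subrr oppr0 !addr0.
  rewrite add0r !row_mxKl !row_mxKr (@q0 _ _ qWq) qY0 addr0.
  move: (qW w') (qY (row_mx v (0 : 'rV['F_2]_n))); f2brute.
Qed.
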